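(* Let $H=([n],E)$ be a hypergraph and $H'=([n],E')$ with $E'\subseteq E$. Let $H^*=([n],E^* )$ be any hypergraph such that for every edge $F\in E$ there exists $F^*\in E^*$ with $F^*\subseteq F$. Then for all $0\le i\le n$, \[0\le f_i(\chi_{H^*}(k))\le f_i(\chi_H(k))\le f_i(\chi_{H'}(k)).\]
   Context: Hypergraphs $([n],E)$ have edges that are nonempty subsets of $[n]$, with no edge of cardinality 1. A proper $k$-coloring is a map $[n]\to[k]$ such that no edge is monochromatic; $\chi_H(k)$ is the number of proper $k$-colorings, a polynomial in $k$ of degree at most $n$. For a polynomial $p(k)$ of degree at most $n$, its $f$-vector $(f_{-1},f_0,\dots,f_n)$ is defined by $p(k)=\sum_{i=0}^n f_i(p)\binom{k-1}{i}$ and $f_{-1}=1$. *)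

(* Defs.v *)
From mathcomp Require Import all_boot all_order all_algebra.
Set Implicit Arguments. Unset Strict Implicit. Unset Printing Implicit Defensive.
Import GRing.Theory Num.Theory.

Definition is_hypergraph (n : nat) (E : {set {set 'I_n}}) : Prop :=
  forall F, F \in E -> 1 < #|F|.

Definition proper_coloring (n k : nat) (E : {set {set 'I_n}})
  (c : {ffun 'I_n -> 'I_k}) : bool :=
  [forall F in E, exists x in F, exists y in F, c x != c y].

Definition chi (n : nat) (E : {set {set 'I_n}}) (k : nat) : nat :=
  #|[set c : {ffun 'I_n -> 'I_k} | proper_coloring E c]|.

(* f is the f-vector (f_0,...,f_n) of the polynomial p of degree <= n, i.e.
   p(k) = \sum_{i=0}^n f_i binom(k-1, i) as polynomials in k.  Since both sides
   are polynomials, it is equivalent to require this for all integers k >= 1;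
   we write k+1 for k, so binom(k-1,i) becomes 'C(k,i). *)
Definition is_fvector (n : nat) (p : nat -> int) (f : nat -> int) : Prop :=
  forall k : nat, p k.+1 = (\sum_(i < n.+1) f i * ('C(k, i))%:Z)%R.

(* Main.v *)
Require Import Defs.
From mathcomp Require Import all_boot all_order all_algebra.
Set Implicit Arguments. Unset Strict Implicit. Unset Printing Implicit Defensive.

Definition imc n m (c : {ffun 'I_n -> 'I_m.+1}) : {set 'I_m.+1} :=
  [set x | (x != ord0) && [exists v, c v == x]].
Definition PS n m (E : {set {set 'I_n}}) (S : {set 'I_m.+1}) :=
  [set c : {ffun 'I_n -> 'I_m.+1} | proper_coloring E c && (imc c == S)].

Lemma transfer n m1 m2 (E : {set {set 'I_n}}) (S1 : {set 'I_m1.+1}) (S2 : {set 'I_m2.+1}) :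
  S1 \subset [set~ ord0] -> S2 \subset [set~ ord0] -> #|S1| = #|S2| ->
  #|PS E S1| <= #|PS E S2|.
Proof.
move=> sS1 sS2 eqS.
pose t (x : 'I_m1.+1) : 'I_m2.+1 :=
  if x == ord0 then ord0 else nth ord0 (enum S2) (index x (enum S1)).
have t0 : t ord0 = ord0 by rewrite /t eqxx.
have S1n0 x : x \in S1 -> x != ord0.
  by move=> /(subsetP sS1); rewrite !inE.
have S2n0 x : x \in S2 -> x != ord0.
  by move=> /(subsetP sS2); rewrite !inE.
have tS x : x \in S1 -> t x \in S2.
  move=> xS; rewrite /t (negbTE (S1n0 _ xS)) -mem_enum; apply: mem_nth.
  by rewrite -cardE -eqS cardE index_mem mem_enum.
have tinj x y : (x == ord0) || (x \in S1) -> (y == ord0) || (y \in S1) ->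
    t x = t y -> x = y.
  case/orP=> [/eqP->|xS]; case/orP=> [/eqP->|yS] //.
  - by move=> e; have := S2n0 _ (tS _ yS); rewrite -e t0 eqxx.
  - by move=> e; have := S2n0 _ (tS _ xS); rewrite e t0 eqxx.
  rewrite /t (negbTE (S1n0 _ xS)) (negbTE (S1n0 _ yS)) => /eqP.
  rewrite nth_uniq ?enum_uniq // -?cardE -?eqS ?cardE ?index_mem ?mem_enum //.
  move/eqP=> e; rewrite -(nth_index ord0 (x:=x) (s:=enum S1)) ?mem_enum //.
  by rewrite e nth_index ?mem_enum.
pose F (c : {ffun 'I_n -> 'I_m1.+1}) : {ffun 'I_n -> 'I_m2.+1} := [ffun v => t (c v)].
have cval c v : c \in PS E S1 -> (c v == ord0) || (c v \in S1).
  rewrite inE => /andP[_ /eqP<-]; case: eqP => //= /eqP ne.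
  by rewrite inE ne; apply/existsP; exists v.
have -> : #|PS E S1| = #|F @: PS E S1|.
  rewrite card_in_imset // => c1 c2 h1 h2 e; apply/ffunP => v.
  apply: tinj; rewrite ?cval //.
  by move/ffunP: e => /(_ v); rewrite !ffunE.
apply: subset_leq_card; apply/subsetP => _ /imsetP[c cP ->].
have cP' := cP; rewrite inE in cP'; case/andP: cP' => pc /eqP imcc.
rewrite inE; apply/andP; split.
  apply/forallP => G; apply/implyP => GE.
  move/forallP: pc => /(_ G); rewrite GE /= => /existsP[x /andP[xG /existsP[y /andP[yG nxy]]]].
  apply/existsP; exists x; rewrite xG /=; apply/existsP; exists y; rewrite yG /= !ffunE.
  by apply/negP => /eqP /(tinj _ _ (cval _ _ cP) (cval _ _ cP)) /eqP; apply/negP.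
have -> : imc (F c) = t @: S1.
  apply/setP => x; rewrite inE; apply/andP/imsetP.
  - case=> xn0 /existsP[v /eqP]; rewrite ffunE => ex.
    exists (c v) => //; case/orP: (cval c v cP) => // /eqP e.
    by move: xn0; rewrite -ex e t0 eqxx.
  - case=> y yS ->; split; first exact: S2n0 (tS _ yS).
    move: yS; rewrite -imcc inE => /andP[_ /existsP[v /eqP cv]].
    by apply/existsP; exists v; rewrite ffunE cv.
rewrite eqEcard; apply/andP; split.
  by apply/subsetP => _ /imsetP[y yS ->]; apply: tS.
rewrite card_in_imset ?eqS // => x y xS yS; apply: tinj; rewrite ?xS ?yS orbT //.
Qed.

Definition gv n (E : {set {set 'I_n}}) j := #|@PS n j E [set~ ord0]|.

Lemma PS_card n k (E : {set {set 'I_n}}) (S : {set 'I_k.+1}) :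
  S \subset [set~ ord0] -> #|PS E S| = gv E #|S|.
Proof.
move=> sS; have cS : #|S| = #|[set~ (@ord0 #|S|)]| by rewrite cardsC1 card_ord.
apply/eqP; rewrite eqn_leq; apply/andP; split; apply: transfer => //.
Qed.

Lemma gv0 n (E : {set {set 'I_n}}) j : n < j -> gv E j = 0.
Proof.
move=> nj; apply/eqP; rewrite cards_eq0; apply/eqP/setP => c; rewrite !inE.
apply/negP => /andP[_ /eqP ic].
have : #|imc c| <= n.
  apply: (leq_trans (subset_leq_card (_ : imc c \subset [set c v | v : 'I_n]))).
    apply/subsetP => x; rewrite inE => /andP[_ /existsP[v /eqP <-]]; exact: imset_f.
  by apply: leq_trans (leq_imset_card _ _) _; rewrite card_ord.
by rewrite ic cardsC1 card_ord /= leqNgt nj.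
Qed.

Lemma chi_decomp n (E : {set {set 'I_n}}) k :
  chi E k.+1 = \sum_(j < k.+1) gv E j * 'C(k, j).
Proof.
rewrite /chi -sum1_card.
rewrite (partition_big (@imc n k) (fun S : {set 'I_k.+1} => S \subset [set~ ord0])); last first.
  move=> c _; apply/subsetP => x; rewrite !inE => /andP[] //.
rewrite /=.
transitivity (\sum_(S : {set 'I_k.+1} | S \subset [set~ ord0]) gv E #|S|).
  apply: eq_bigr => S sS; rewrite -PS_card // -sum1_card.
  by apply: eq_bigl => c; rewrite !inE.
rewrite (partition_big (fun S : {set 'I_k.+1} => (inord #|S| : 'I_k.+1)) predT) //=.
apply: eq_bigr => j _.
have cS (S : {set 'I_k.+1}) : S \subset [set~ ord0] -> #|S| <= k.
  by move/subset_leq_card; rewrite cardsC1 card_ord.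
transitivity (\sum_(S in [set S : {set 'I_k.+1} | S \subset [set~ ord0] & #|S| == j]) gv E j).
  apply: eq_big => S; rewrite ?inE.
    case sS: (S \subset [set~ ord0]) => //=.
    by rewrite -val_eqE /= inordK // ltnS cS.
  by case/andP=> sS /eqP <-; rewrite inordK // ltnS cS.
by rewrite sum_nat_const cards_draws cardsC1 card_ord mulnC.
Qed.

Lemma chi_decomp_n n (E : {set {set 'I_n}}) k :
  chi E k.+1 = \sum_(j < n.+1) gv E j * 'C(k, j).
Proof.
rewrite chi_decomp.
rewrite (big_ord_widen (k + n).+1 (fun j => gv E j * 'C(k, j))) ?ltnS ?leq_addr //.
rewrite [RHS](big_ord_widen (k + n).+1 (fun j => gv E j * 'C(k, j))) ?ltnS ?leq_addl //.
rewrite [LHS]big_mkcond [RHS]big_mkcond; apply: eq_bigr => j _.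
case: ifP; case: ifP => // h1 h2.
  by rewrite gv0 ?mul0n // ltnNge -ltnS h1.
by rewrite bin_small ?muln0 // ltnNge -ltnS h2.
Qed.

Lemma fv_unique n (p : nat -> int) f g : is_fvector n p f -> is_fvector n p g ->
  forall i, i <= n -> f i = g i.
Proof.
move=> Hf Hg; elim/ltn_ind => i IH lin.
have := Hf i; rewrite Hg => /eqP; rewrite -GRing.subr_eq0 -GRing.sumrB.
rewrite (bigD1 (Ordinal (lin : i < n.+1))) //= big1.
  by rewrite GRing.addr0 binn !GRing.mulr1 GRing.subr_eq0 => /eqP.
move=> j /negbTE nji; rewrite -GRing.mulrBl.
case: (ltngtP j i) => h.
- by rewrite IH ?GRing.subrr ?GRing.mul0r // (leq_trans (ltnW h)).
- by rewrite bin_small // GRing.mulr0.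
- by move: nji; rewrite -val_eqE /= h eqxx.
Qed.

Import GRing.Theory Num.Theory.
Local Open Scope ring_scope.

Lemma gv_fvector n (E : {set {set 'I_n}}) :
  is_fvector n (fun k => (chi E k)%:Z) (fun j => (gv E j)%:Z).
Proof.
move=> k; rewrite chi_decomp_n -natz natr_sum.
by apply: eq_bigr => j _; rewrite natrM !natz.
Qed.

Lemma gv_mono n (E1 E2 : {set {set 'I_n}}) j :
  (forall m (c : {ffun 'I_n -> 'I_m}), proper_coloring E1 c -> proper_coloring E2 c) ->
  (gv E1 j <= gv E2 j)%N.
Proof.
move=> h; apply: subset_leq_card; apply/subsetP => c; rewrite !inE.
by case/andP=> /h -> ->.
Qed.


Theorem mainTheorem7 (n : nat) (E E' Es : {set {set 'I_n}})
  (f f' fs : nat -> int) :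
  is_hypergraph E -> is_hypergraph Es -> (E' \subset E)%N ->
  (forall F, F \in E -> exists2 Fs, Fs \in Es & (Fs \subset F)%N) ->
  is_fvector n (fun k => (chi E k)%:Z) f ->
  is_fvector n (fun k => (chi E' k)%:Z) f' ->
  is_fvector n (fun k => (chi Es k)%:Z) fs ->
  forall i : nat, (i <= n)%N ->
    0 <= fs i /\ fs i <= f i /\ f i <= f' i.
Proof.
move=> _ _ sE hEs Hf Hf' Hfs i lin.
rewrite (fv_unique Hf (gv_fvector E) lin) (fv_unique Hf' (gv_fvector E') lin).
rewrite (fv_unique Hfs (gv_fvector Es) lin).
split; first by [].
split; rewrite lez_nat; apply: gv_mono => m c /forallP pc; apply/forallP => F;
  apply/implyP => FE.
- have [Fs FsE sFs] := hEs F FE.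
  move: (pc Fs); rewrite FsE /= => /existsP[x /andP[xF /existsP[y /andP[yF ne]]]].
  apply/existsP; exists x; rewrite (subsetP sFs) //=.
  by apply/existsP; exists y; rewrite (subsetP sFs).
- by move: (pc F); rewrite (subsetP sE).
Qed.
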